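(* A superreduced walk with excess $\xi$ has length at most $4\xi$ and spans a tree with at most $\xi+1$ vertices. Consequently its generating function $S_\xi(v,z)$ is a polynomial of degree $\xi+1$ in $v$ and $2\xi$ in $z$.
   Context: A tree walk of size $m$ and length $L$ is a sequence $W=(v_1,\dots,v_L)$ of elements of $[m]$ in which every element of $[m]$ occurs, such that the graph with vertex set $[m]$ and edges $\{v_j,v_{j+1}\}$ ($1\le j<L$) and $\{v_L,v_1\}$ is a tree; $W$ is the closed walk $v_1\to\dots\to v_L\to v_1$. Each edge is traversed $2k$ times ($k\ge1$); its excess is $k-1$; it is simple if $k=1$. The excess of $W$ is the sum of the edge excesses, i.e. $\ell-(m-1)$ for length $2\ell$ and size $m$. A superreduced walk is a tree walk with no simple edge (the one-vertex walk of length $0$ included). With $s_{m,2\ell}$ the number of superreduced walks of size $m$ and length $2\ell$, $S_\xi(v,z)=\sum_{\ell,m:\,\ell-m+1=\xi}s_{m,2\ell}\frac{v^m}{m!}z^\ell$. *)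

(* Defs.v *)
From mathcomp Require Import all_boot all_order all_algebra.
Set Implicit Arguments. Unset Strict Implicit. Unset Printing Implicit Defensive.
Import GRing.Theory.

(* Cycles with distinct vertices have at most #|T| vertices, so the
   acyclicity quantifier is bounded to make the predicate boolean. *)
Definition is_tree (T : finType) (e : rel T) : bool :=
  [&& 0 < #|T|,
      [forall x, ~~ e x x],
      [forall x, forall y, connect e x y] &
      [forall n : 'I_#|T|.+1, forall c : n.-tuple T,
         (uniq c && (2 < n)) ==> ~~ cycle e c]].

(* The closed walk v_1 -> ... -> v_L -> v_1 : its list of steps
   (v_j, v_{j+1}) for j < L and (v_L, v_1). *)
Definition steps (T : eqType) (W : seq T) : seq (T * T) := zip W (rot 1 W).

Definition wadj (T : eqType) (W : seq T) : rel T :=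
  fun x y => has (fun p => (p == (x, y)) || (p == (y, x))) (steps W).

Definition wmult (T : eqType) (W : seq T) (x y : T) : nat :=
  count (fun p => (p == (x, y)) || (p == (y, x))) (steps W).

Definition tree_walk (m : nat) (W : seq 'I_m) : bool :=
  [forall x : 'I_m, x \in W] && is_tree (wadj W).

(* Superreduced walk: a tree walk with no simple edge (edge traversed exactly
   twice), together with the one-vertex walk of length 0. *)
Definition superreduced (m : nat) (W : seq 'I_m) : bool :=
  ((m == 1%N) && (W == [::]))
  || (tree_walk W && [forall x, forall y, wadj W x y ==> (wmult W x y != 2%N)]).

Definition s_count (m l : nat) : nat :=
  #|[pred t : (2 * l).-tuple 'I_m | superreduced (tval t)]|.

(* Coefficient of v^m z^l in S_xi(v,z) = sum_{l - m + 1 = xi} s_{m,2l} v^m/m! z^l. *)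
Definition S_coef (xi m l : nat) : rat :=
  if (l + 1 == xi + m)%N then ((s_count m l)%:R / (m`!)%:R)%R else 0%R.

(* Main.v *)
Require Import Defs.
From mathcomp Require Import all_boot all_order all_algebra.
From mathcomp Require Import zify.
Import GRing.Theory Num.Theory.

Lemma parity_zip (T : eqType) (f : T -> bool) (y : T) (s : seq T) (x : T) :
  odd (count (fun p => f p.1 != f p.2) (zip (x :: s) (rcons s y))) = f x (+) f y.
Proof.
elim: s x => [|z s IH] x /=.
  by rewrite addn0; case: (f x); case: (f y).
by rewrite oddD IH; case: (f x); case: (f z); case: (f y).
Qed.

Lemma steps_parity (T : eqType) (f : T -> bool) (W : seq T) :
  ~~ odd (count (fun p => f p.1 != f p.2) (steps W)).
Proof. by case: W => [|x s] //; rewrite /steps rot1_cons parity_zip addbb. Qed.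

Lemma wadj_sym (T : eqType) (W : seq T) x y : wadj W x y = wadj W y x.
Proof. by rewrite /wadj; apply: eq_has => p; rewrite orbC. Qed.

Lemma wadj_in (T : eqType) (W : seq T) p : p \in steps W -> wadj W p.1 p.2.
Proof. by case: p => x y Hp; apply/hasP; exists (x, y) => //=; rewrite eqxx. Qed.

Lemma wmult_even (T : finType) (W : seq T) (a b : T) :
  is_tree (wadj W) -> wadj W a b -> ~~ odd (wmult W a b).
Proof.
case/and4P => _ /forallP noloop _ /forallP acyc eab.
have nab : a != b by apply: contraTneq eab => ->; exact: noloop.
set e := wadj W.
pose P := fun p : T * T => (p == (a, b)) || (p == (b, a)).
pose e' := fun x y => e x y && ~~ P (x, y).
pose f := fun x => connect e' b x.
have e'sym x y : e' x y = e' y x.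
  rewrite /e' /e wadj_sym /P !xpair_eqE; congr (_ && ~~ _).
  by rewrite orbC; congr (_ || _); exact: andbC.
have fa : ~~ f a.
  apply/negP => /connectP [p pth lst]; move: pth lst.
  case/shortenP => p' pth' up' _ lst'.
  case: p' pth' up' lst' => [|x [|y r]] pth' up' lst'.
  - by move: nab; rewrite lst' eqxx.
  - move: pth'; rewrite /= in lst'; rewrite /= -lst' andbT /e' /P eqxx orbT /=.
    by rewrite andbF.
  - set c := b :: x :: y :: r.
    have szc : size c < #|T|.+1.
      by rewrite ltnS -(card_uniqP up'); exact: max_card.
    have := acyc (Ordinal szc) => /forallP /(_ (in_tuple c)) /implyP.
    rewrite up' /= => /(_ isT) /negP; apply.
    have pe : path e b [:: x, y & r].
      by apply: (sub_path _ pth') => u v /andP[].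
    have : path e b (rcons [:: x, y & r] b) by rewrite rcons_path pe -lst'.
    by [].
have fb : f b by exact: connect0.
have key : {in steps W, P =1 (fun p => f p.1 != f p.2)}.
  move=> [x y] /wadj_in /= exy.
  case Pxy: (P (x, y)).
    move: Pxy; rewrite /P !xpair_eqE => /orP [] /andP [/eqP -> /eqP ->].
      by rewrite fb (negbTE fa).
    by rewrite fb (negbTE fa).
  have e1 : e' x y by apply/andP; split; [exact: exy | rewrite Pxy].
  have e2 : e' y x by rewrite -e'sym.
  apply/esym/negbTE; rewrite negbK; apply/eqP; rewrite /f /=; apply/idP/idP => H.
    exact: connect_trans H (connect1 e1).
  exact: connect_trans H (connect1 e2).
rewrite /wmult (eq_in_count key).
exact: steps_parity.
Qed.

Lemma index_nth_le (T : eqType) (x0 : T) (s : seq T) (i : nat) :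
  i < size s -> index (nth x0 s i) s <= i.
Proof.
elim: s i => [|y s IH] [|i] //= Hi.
  by rewrite eqxx.
by case: (y == nth x0 s i) => //; rewrite ltnS IH.
Qed.

Lemma sum_count_disj (I : finType) (D : pred I) (T : Type) (Q : I -> pred T) (t : seq T) :
  (forall p i j, D i -> D j -> Q i p -> Q j p -> i = j) ->
  \sum_(i | D i) count (Q i) t <= size t.
Proof.
move=> H; elim: t => [|p t IH].
  by rewrite big1.
rewrite (eq_bigr (fun i => Q i p + count (Q i) t)) // big_split /=.
rewrite -add1n leq_add //.
case: (pickP (fun i => D i && Q i p)) => [i0 /andP[Di0 Qi0] | none].
  rewrite (bigD1 i0) //= big1 ?Qi0 // => i /andP[Di ne].
  case Qip: (Q i p) => //.
  by move: ne; rewrite (H p i i0 Di Di0 Qip Qi0) eqxx.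
rewrite big1 // => i Di.
by have := none i; rewrite Di /= => ->.
Qed.

Lemma lower_bound (T : finType) (W : seq T) :
  [forall x, x \in W] -> is_tree (wadj W) ->
  [forall x, forall y, wadj W x y ==> (wmult W x y != 2)] ->
  4 * (#|T|.-1) <= size W.
Proof.
move=> allW tr nos.
have := tr; case/and4P => /card_gt0P [x0 _] _ _ _.
case: W allW tr nos => [|r s] allW tr nos.
  by have := forallP allW x0.
set W := r :: s.
pose par x := nth r W (index x s).
have inS x : x != r -> x \in s.
  by move=> xr; have := forallP allW x; rewrite inE (negbTE xr).
have idxW x : x != r -> index x W = (index x s).+1.
  by move=> xr; rewrite /W /= eq_sym (negbTE xr).
have stepin x : x != r -> (par x, x) \in steps W.
  move=> xr.
  have lt : index x s < size s by rewrite index_mem inS.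
  have -> : (par x, x) = nth (r, r) (steps W) (index x s).
    rewrite /steps nth_zip; last by rewrite size_rot.
    by rewrite rot1_cons nth_rcons lt /par nth_index ?inS.
  apply: mem_nth; rewrite /steps size_zip size_rot minnn /=. lia.
have parlt x : x != r -> index (par x) W < index x W.
  move=> xr; rewrite (idxW x xr).
  have h : index x s < size W by have := index_size x s; rewrite /=; lia.
  exact: (@index_nth_le _ r W _ h).
pose Q x := fun p : T * T => (p == (par x, x)) || (p == (x, par x)).
have : \sum_(x | x != r) count (Q x) (steps W) <= size (steps W).
  apply: sum_count_disj => p x y xr yr.
  rewrite /Q => /orP [] /eqP -> /orP [] /eqP [e1 e2] //.
  - have := parlt x xr; have := parlt y yr; rewrite -e2 e1; lia.
  - have := parlt x xr; have := parlt y yr; rewrite -e1 e2; lia.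
rewrite /steps size_zip size_rot minnn => Hs.
apply: leq_trans Hs.
rewrite -(cardC1 r) mulnC -sum_nat_const.
apply: leq_sum => x xr.
have := stepin x xr => /wadj_in /= ad.
have ev := @wmult_even _ _ _ _ tr ad.
have n2 := implyP (forallP (forallP nos (par x)) x) ad.
have pos : 0 < wmult W (par x) x by rewrite /wmult -has_count.
move: ev n2 pos; rewrite /wmult -/(Q x).
case: (count (Q x) (steps W)) => [|[|[|[|n]]]] //.
Qed.

Definition gW (T : Type) (z : T) (ks : seq T) := flatten [seq [:: z; k; z; k] | k <- ks].
Definition gF (T : Type) (z : T) (ks : seq T) :=
  flatten [seq [:: (z, k); (k, z); (z, k); (k, z)] | k <- ks].

Arguments gW {T}. Arguments gF {T}.

Lemma zip_star (T : Type) (z : T) (ks : seq T) (y : T) :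
  zip (y :: gW z ks) (rcons (gW z ks) z) = (y, z) :: gF z ks.
Proof. by elim: ks y => [|k ks IH] y //=; rewrite IH. Qed.

Lemma steps_star (T : eqType) (z : T) (ks : seq T) : steps (gW z ks) = gF z ks.
Proof.
case: ks => [|k ks] //.
have -> : gW z (k :: ks) = z :: k :: z :: k :: gW z ks by [].
have -> : gF z (k :: ks) = [:: (z, k), (k, z), (z, k) & (k, z) :: gF z ks] by [].
by rewrite /steps rot1_cons /= zip_star.
Qed.

Lemma star_adj (T : eqType) (z : T) (ks : seq T) x y :
  z \notin ks -> wadj (gW z ks) x y -> (x == z) != (y == z).
Proof.
move=> zks; rewrite /wadj steps_star => /hasP [p /flatten_mapP [k kin pin] /orP H].
have kz : k != z by apply: contraNneq zks => <-.
have : (p == (z, k)) || (p == (k, z)).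
  by move: pin; rewrite !inE; case/or4P => ->; rewrite ?orbT.
by case/orP => /eqP Ep; rewrite Ep in H; case: H => /eqP [<- <-]; rewrite eqxx ?(negbTE kz).
Qed.

Lemma star_adj2 (T : eqType) (z : T) (ks : seq T) k :
  k \in ks -> wadj (gW z ks) z k.
Proof.
move=> kin; rewrite /wadj steps_star; apply/hasP; exists (z, k); last by rewrite eqxx.
by apply/flatten_mapP; exists k => //; rewrite inE eqxx.
Qed.

Lemma star_mult (T : eqType) (z : T) (ks : seq T) x y :
  4 %| wmult (gW z ks) x y.
Proof.
rewrite /wmult steps_star; elim: ks => [|k ks IH] //.
have -> : gF z (k :: ks) = [:: (z, k); (k, z); (z, k); (k, z)] ++ gF z ks by [].
rewrite count_cat dvdn_addr //=.
have -> : ((k, z) == (x, y)) || ((k, z) == (y, x)) = ((z, k) == (x, y)) || ((z, k) == (y, x)).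
  by rewrite !xpair_eqE orbC; congr (_ || _); exact: andbC.
by case: (_ || _).
Qed.

Lemma star_super (n : nat) : 0 < n ->
  superreduced (gW (ord0 : 'I_n.+1) [seq lift ord0 k | k <- enum 'I_n]).
Proof.
move=> n0.
set ks := [seq lift ord0 k | k <- enum 'I_n].
set z : 'I_n.+1 := ord0.
have zks : z \notin ks.
  apply/mapP => [[k _ E]]; move: (neq_lift ord0 k); by rewrite -E /z eqxx.
have inks x : x != z -> x \in ks.
  move=> xz; case: (unliftP z x) xz => [j -> _ | -> ]; last by rewrite eqxx.
  by apply: map_f; rewrite mem_enum.
set W := gW z ks.
have adjz x : x != z -> wadj W x z && wadj W z x.
  by move=> xz; rewrite wadj_sym andbb; apply: star_adj2; apply: inks.
apply/orP; right; apply/andP; split; last first.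
  apply/forallP => x; apply/forallP => y; apply/implyP => _.
  by apply/negP => /eqP H; have := @star_mult _ z ks x y; rewrite -/W H.
apply/andP; split.
  apply/forallP => x.
  have zW : z \in W.
    have [k kin] : exists k, k \in ks.
      by exists (lift ord0 (Ordinal n0)); apply: map_f; rewrite mem_enum.
    by apply/flatten_mapP; exists k => //; rewrite inE eqxx.
  case: (eqVneq x z) => [-> // | xz].
  by apply/flatten_mapP; exists x; [exact: inks | rewrite !inE eqxx ?orbT].
apply/and4P; split.
- by rewrite card_ord.
- by apply/forallP => x; apply/negP => /(@star_adj _ z ks _ _ zks); rewrite eqxx.
- have cz x : connect (wadj W) x z && connect (wadj W) z x.
    case: (eqVneq x z) => [-> | xz]; first by rewrite connect0.
    by case/andP: (adjz x xz) => h1 h2; rewrite !connect1.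
  apply/forallP => x; apply/forallP => y.
  by case/andP: (cz x) => h1 _; case/andP: (cz y) => _ h2; apply: connect_trans h1 h2.
- apply/forallP => m; apply/forallP => c; apply/implyP => /andP [uc m2].
  have sz := size_tuple c.
  move: uc; rewrite -sz in m2; case: (tval c) m2 => [|x0 [|x1 [|x2 r]]] //= _.
  have E := @star_adj _ z ks _ _ zks.
  rewrite !inE !negb_or.
  case: r => [|x3 r] /=.
  + move=> /and3P [/andP [n01 n02] /andP [n12 _] _].
    apply/negP => /and4P [/E a01 /E a12 /E a20 _].
    move: a01 a12 a20 n01 n02 n12.
    by case: (eqVneq x0 z) => [?|?]; case: (eqVneq x1 z) => [?|?]; case: (eqVneq x2 z) => [?|?]; subst; rewrite ?eqxx.
  + move=> /and5P [/and3P [n01 n02 _] /andP [n12 n13'] _ _ _].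
    move: n13'; rewrite inE negb_or => /andP [n13 _].
    apply/negP => /and4P [/E a01 /E a12 /E a23 _].
    move: a01 a12 a23 n01 n02 n12 n13.
    by case: (eqVneq x0 z) => [?|?]; case: (eqVneq x1 z) => [?|?]; case: (eqVneq x2 z) => [?|?]; case: (eqVneq x3 z) => [?|?]; subst; rewrite ?eqxx.
Qed.

Lemma sr_bound m (W : seq 'I_m) : superreduced W -> 4 * (m - 1) <= size W.
Proof.
case/orP => [/andP [/eqP m1 /eqP W0] | /andP [/andP [allW tr] nos]].
  by rewrite W0 m1.
by have := @lower_bound _ _ allW tr nos; rewrite card_ord subn1.
Qed.

Lemma size_gW (T : Type) (z : T) (ks : seq T) : size (gW z ks) = 4 * size ks.
Proof.
elim: ks => [|k ks IH] //.
have -> : gW z (k :: ks) = [:: z; k; z; k] ++ gW z ks by [].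
by rewrite size_cat IH /=; lia.
Qed.

Lemma s_pos n : 0 < s_count n.+1 (2 * n).
Proof.
case: n => [|n].
  by apply/card_gt0P; exists [tuple].
set W := gW (ord0 : 'I_n.+2) [seq lift ord0 k | k <- enum 'I_n.+1].
have sz : size W == 2 * (2 * n.+1).
  by rewrite /W size_gW size_map size_enum_ord; apply/eqP; lia.
apply/card_gt0P; exists (Tuple sz).
by rewrite inE /=; apply: star_super.
Qed.

Theorem proposition2 :
  (forall (m l xi : nat) (W : seq 'I_m),
      superreduced W -> size W = (2 * l)%N -> (l + 1 = xi + m)%N ->
      (size W <= 4 * xi)%N /\ (m <= xi + 1)%N)
  /\
  (forall xi : nat,
      (forall m l : nat, S_coef xi m l != 0%R -> (m <= xi + 1)%N /\ (l <= 2 * xi)%N)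
      /\ (exists l : nat, S_coef xi (xi + 1) l != 0%R)
      /\ (exists m : nat, S_coef xi m (2 * xi) != 0%R)).
Proof.
have P1 : forall (m l xi : nat) (W : seq 'I_m),
      superreduced W -> size W = (2 * l)%N -> (l + 1 = xi + m)%N ->
      (size W <= 4 * xi)%N /\ (m <= xi + 1)%N.
  move=> m l xi W sr sz e; have := @sr_bound _ _ sr; rewrite sz => h; split; lia.
have P2 : forall xi, S_coef xi (xi + 1) (2 * xi) != 0%R.
  move=> xi; rewrite /S_coef.
  have -> : (2 * xi + 1 == xi + (xi + 1)) = true by apply/eqP; lia.
  rewrite addn1 mulf_neq0 // ?invr_eq0 pnatr_eq0 -lt0n ?fact_gt0 //.
  exact: s_pos.
split => // xi; split; last by split; [exists (2 * xi) | exists (xi + 1)].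
move=> m l; rewrite /S_coef; case: ifP => [/eqP e H | ]; last by rewrite eqxx.
have : s_count m l != 0 by apply: contraNneq H => ->; rewrite mul0r.
rewrite /s_count -lt0n => /card_gt0P [t tin].
rewrite inE /= in tin.
have := P1 m l xi t tin (size_tuple t) e; rewrite size_tuple => [[h1 h2]].
split => //; lia.
Qed.
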